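(* For all $\alpha\ge1/2$ and $\rho>1/2$, $$\sup_{k\in\mathbb Z\setminus\{0\}}|k|^{2+2\alpha}\sum_{*}|k_1k_2k_3|^{-2\alpha}\frac{1}{|k-k_1|^{2\rho}|k-k_2|^{2\rho}|k-k_3|^{2\rho}}<+\infty,$$ where $\sum_*$ denotes the sum over $(k_1,k_2,k_3)\in\mathbb Z^3$ with $k_1+k_2+k_3=k$, $k_1k_2k_3\ne0$ and $k_2\ne k$, $k_3\ne k$. *)

(* Defs.v *)
From HB Require Import structures.
From mathcomp Require Import all_boot all_order all_algebra.
From mathcomp Require Import all_classical all_reals all_analysis.
Set Implicit Arguments. Unset Strict Implicit. Unset Printing Implicit Defensive.
Import Order.TTheory GRing.Theory Num.Theory.
Local Open Scope ring_scope.
Local Open Scope classical_set_scope.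

Definition starset (k : int) : set (int * int * int) :=
  [set p | let '(k1, k2, k3) := p in
           [/\ k1 + k2 + k3 = k, k1 * k2 * k3 != 0, k2 != k & k3 != k]].

Definition summand (R : realType) (a r : R) (k : int) (p : int * int * int) : R :=
  let '(k1, k2, k3) := p in
  1 / (`|(k1 * k2 * k3)%:~R : R| `^ (2 * a))
  * (1 / (`|(k - k1)%:~R : R| `^ (2 * r)
          * `|(k - k2)%:~R : R| `^ (2 * r)
          * `|(k - k3)%:~R : R| `^ (2 * r))).

(* Main.v *)
Require Import Defs.
From HB Require Import structures.
From mathcomp Require Import all_boot all_order all_algebra.
From mathcomp Require Import all_classical all_reals all_analysis.
From mathcomp Require Import ring lra zify.
Import Order.TTheory GRing.Theory Num.Theory.
Local Open Scope ring_scope.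
Local Open Scope classical_set_scope.

Section Riem.
Variable R : realType.

Lemma ln_ratio_ge (m : R) : 1 < m -> m^-1 <= ln (m / (m - 1)).
Proof.
move=> m1.
have m0 : 0 < m by lra.
have m10 : 0 < m - 1 by lra.
have -> : m / (m - 1) = ((m - 1) / m)^-1 by rewrite invf_div.
rewrite lnV; last by rewrite posrE divr_gt0.
have -> : (m - 1) / m = 1 + (- m^-1) by rewrite mulrBl mulfV ?gt_eqF // mul1r.
rewrite lerNr; apply: le_ln1Dx.
rewrite ltrN2 invf_lt1 //.
Qed.

Lemma riem_step (d m : R) : 0 < d -> 1 < m ->
  (m `^ (1 + d))^-1 <= (((m - 1) `^ d)^-1 - (m `^ d)^-1) / d.
Proof.
move=> d0 m1.
have m0 : 0 < m by lra.
have m10 : 0 < m - 1 by lra.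
set p := m `^ d; set q := (m - 1) `^ d.
have p0 : 0 < p by apply: powR_gt0.
have q0 : 0 < q by apply: powR_gt0.
have -> : m `^ (1 + d) = m * p.
  rewrite powRD; last by apply/implyP => _; rewrite gt_eqF.
  by rewrite powRr1 // ltW.
have hp : p = q * (m / (m - 1)) `^ d.
  rewrite /p /q -powRM ?(ltW m10) ?divr_ge0 ?(ltW m0) ?(ltW m10) //.
  by rewrite mulrC divfK // gt_eqF.
have hw : 1 + d / m <= (m / (m - 1)) `^ d.
  rewrite /powR gt_eqF ?divr_gt0 //.
  apply: le_trans (expR_ge1Dx _).
  rewrite lerD2l ler_pM2l //.
  exact: ln_ratio_ge.
have : q * (1 + d / m) <= p by rewrite hp ler_pM2l.
move=> H.
rewrite -subr_ge0.
have -> : (q^-1 - p^-1) / d - (m * p)^-1 = (p - q * (1 + d / m)) / (p * q * d).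
  by field; rewrite !gt_eqF.
by apply: divr_ge0; [rewrite subr_ge0 | rewrite !mulr_ge0 // ltW].
Qed.


Lemma riem_sum_aux (d : R) n : 0 < d ->
  \sum_(i < n.+1) ((i.+1)%:R `^ (1 + d))^-1
    <= 1 + (1 - ((n.+1)%:R `^ d)^-1) / d.
Proof.
move=> d0; elim: n => [|n IH].
  by rewrite big_ord_recr big_ord0 /= add0r !powR1 invr1 subrr mul0r addr0.
rewrite big_ord_recr /=.
have := @riem_step d (n.+2)%:R d0.
rewrite ltr1n => /(_ isT).
have -> : (n.+2)%:R - 1 = (n.+1)%:R :> R.
  by rewrite mulrS addrC addrK.
move=> H; apply: le_trans (lerD IH H) _.
by rewrite !mulrBl mul1r; lra.
Qed.

Lemma riem_sum (d : R) n : 0 < d ->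
  \sum_(i < n) ((i.+1)%:R `^ (1 + d))^-1 <= 1 + d^-1.
Proof.
move=> d0; case: n => [|n]; first by rewrite big_ord0 addr_ge0 // invr_ge0 ltW.
apply: le_trans (@riem_sum_aux d n d0) _.
rewrite lerD2l mulrBl mul1r gerBl; apply: divr_ge0; [rewrite invr_ge0; exact: powR_ge0 | exact: ltW].
Qed.

End Riem.

Section EsumInt.
Variable R : realType.
Local Open Scope ereal_scope.

Lemma esum_nat_le (a : nat -> R) (M : R) :
  (forall n, (0 <= a n)%R) ->
  (forall n, (\sum_(i < n) a i <= M)%R) ->
  \esum_(i in [set: nat]) (a i)%:E <= M%:E.
Proof.
move=> a0 aM.
rewrite -nneseries_esumT; last by move=> n; rewrite lee_fin.
apply: lime_le; first by apply: is_cvg_nneseries => n _ _; rewrite lee_fin.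
apply: nearW => n.
by rewrite /= big_mkord sumEFin lee_fin.
Qed.


Definition gpow (t : R) (j : int) : R := (`|j%:~R : R| `^ t)^-1.

Lemma gpow_ge0 t j : (0 <= gpow t j)%R.
Proof. by rewrite /gpow invr_ge0 powR_ge0. Qed.

Lemma riem_sum' (t : R) n : (1 < t)%R ->
  (\sum_(i < n) ((i.+1)%:R `^ t)^-1 <= 1 + (t - 1)^-1)%R.
Proof.
move=> t1; have := @riem_sum R (t - 1) n.
have -> : (1 + (t - 1) = t)%R by rewrite addrC subrK.
by rewrite subr_gt0 => /(_ t1).
Qed.

Lemma esum_int_le (t : R) : (1 < t)%R ->
  \esum_(j in [set: int]) (gpow t j)%:E <= (2 * (1 + (t - 1)^-1))%:E.
Proof.
move=> t1.
rewrite (esumID [set j : int | (0 <= j)%R]); last by move=> i _; rewrite lee_fin gpow_ge0.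
have e1 : [set: int] `&` [set j | (0 <= j)%R] = Posz @` [set: nat].
  apply/seteqP; split => [j [_ /= j0]|j [n _ <-]] //.
  by exists `|j|%N => //; rewrite gez0_abs.
have e2 : [set: int] `&` ~` [set j | (0 <= j)%R] = Negz @` [set: nat].
  apply/seteqP; split => [j [_ /= j0]|j [n _ <-]] //.
  by case: j j0 => // n _; exists n.
rewrite e1 e2 !esum_image; first last.
- by move=> x y _ _ [].
- by move=> x y _ _ [].
rewrite mulrDl mul1r EFinD.
apply: leeD.
- apply: esum_nat_le => [n|n]; first exact: gpow_ge0.
  apply: le_trans _ (riem_sum' t n t1).
  apply: (@le_trans _ _ (\sum_(i < n.+1) gpow t (Posz i))%R).
    by rewrite big_ord_recr /= lerDl gpow_ge0.
  rewrite big_ord_recl /= /gpow /= normr0 powR0 ?gt_eqF ?(lt_trans ltr01) //.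
  rewrite invr0 add0r; apply: ler_sum => i _.
  by rewrite ger0_norm.
- apply: esum_nat_le => [n|n]; first exact: gpow_ge0.
  apply: le_trans _ (riem_sum' t n t1).
  apply: ler_sum => i _.
  by rewrite /gpow /= normrN ger0_norm.
Qed.


Lemma esumZ_le (T : choiceType) (S : set T) (c : \bar R) (f : T -> \bar R) :
  0 <= c -> (forall x, 0 <= f x) ->
  \esum_(i in S) (c * f i) <= c * \esum_(i in S) f i.
Proof.
move=> c0 f0; apply: ge_ereal_sup => _ [X [finX XS] <-].
rewrite -ge0_mule_fsumr //; apply: lee_wpmul2l => //.
by apply: ereal_sup_ubound; exists X.
Qed.

Lemma esum_pair (T : choiceType) (S : set T) (f : T -> int * int) (t : R) :
  (1 < t)%R -> set_inj S f ->
  \esum_(p in S) (gpow t (f p).1 * gpow t (f p).2)%:E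
    <= (2 * (1 + (t - 1)^-1))%:E * (2 * (1 + (t - 1)^-1))%:E.
Proof.
move=> t1 finj.
set M := (2 * (1 + (t - 1)^-1))%R.
have M0 : (0 <= M)%R.
  by rewrite /M mulr_ge0 // addr_ge0 // invr_ge0 subr_ge0 ltW.
set h := fun q : int * int => (gpow t q.1 * gpow t q.2)%:E.
have h0 q : 0 <= h q by rewrite lee_fin mulr_ge0 // gpow_ge0.
rewrite -(esum_image S f h finj).
apply: (@le_trans _ _ (\esum_(q in [set: int * int]) h q)).
  rewrite [X in X <= _]esum_mkcond; apply: le_esum => q _.
  by case: ifP.
have -> : [set: int * int] = [set: int] `*`` (fun _ => [set: int]).
  by apply/seteqP; split.
have -> : \esum_(q in [set: int] `*`` (fun _ => [set: int])) h q =
    \esum_(i in [set: int]) \esum_(j in [set: int]) h (i, j).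
  by rewrite esum_esum //; apply: eq_esum => -[i j].
apply: (@le_trans _ _ (\esum_(i in [set: int]) (M%:E * (gpow t i)%:E))).
  apply: le_esum => i _.
  apply: (@le_trans _ _ ((gpow t i)%:E * \esum_(j in [set: int]) (gpow t j)%:E)).
    rewrite /h /=.
    under eq_esum do rewrite EFinM.
    by apply: esumZ_le => [|j]; rewrite lee_fin gpow_ge0.
  rewrite muleC; apply: lee_wpmul2r; first by rewrite lee_fin gpow_ge0.
  exact: esum_int_le.
apply: le_trans (@esumZ_le int [set: int] M%:E (fun i => (gpow t i)%:E) _ _) _.
- by rewrite lee_fin.
- by move=> j; rewrite lee_fin gpow_ge0.
apply: lee_wpmul2l; first by rewrite lee_fin.
exact: esum_int_le.
Qed.

End EsumInt.
Arguments gpow {R}.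
Arguments gpow_ge0 {R}.
Arguments esumZ_le {R}.
Arguments esum_pair {R}.


Section Pointwise.
Variable R : realType.

Lemma L1 (t K x y : R) : 1 < t -> 1 <= x -> 1 <= y -> K <= x + y ->
  K / (x * y `^ t) <= 2 * ((x `^ t)^-1 + (y `^ t)^-1).
Proof.
move=> t1 x1 y1 Kxy.
have x0 : 0 < x by lra.
have y0 : 0 < y by lra.
have X0 : 0 < x `^ t by apply: powR_gt0.
have Y0 : 0 < y `^ t by apply: powR_gt0.
have t0 : 0 < t by lra.
have [xy|yx] := leP y x.
  apply: (@le_trans _ _ (2 * (y `^ t)^-1)); last first.
    by rewrite ler_pM2l // lerDr invr_ge0 ltW.
  rewrite -subr_ge0.
  have -> : 2 * (y `^ t)^-1 - K / (x * y `^ t) = (2 * x - K) / (x * y `^ t).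
    by field; rewrite !gt_eqF.
  by apply: divr_ge0; [lra | rewrite mulr_ge0 // ltW].
apply: (@le_trans _ _ (2 * (x `^ t)^-1)); last first.
  by rewrite ler_pM2l // lerDl invr_ge0 ltW.
have hx : x `^ t = x * x `^ (t - 1) by rewrite mulr_powRB1 // ltW.
have hy : y `^ t = y * y `^ (t - 1) by rewrite mulr_powRB1 // ltW.
have Xd0 : 0 < x `^ (t - 1) by apply: powR_gt0.
have Yd0 : 0 < y `^ (t - 1) by apply: powR_gt0.
have XY : x `^ (t - 1) <= y `^ (t - 1).
  by apply: ge0_ler_powR; rewrite ?nnegrE ?subr_ge0 ?ltW.
rewrite hx hy -subr_ge0.
have -> : 2 * (x * x `^ (t - 1))^-1 - K / (x * (y * y `^ (t - 1)))
   = (2 * y * y `^ (t - 1) - K * x `^ (t - 1)) / (x * x `^ (t - 1) * y * y `^ (t - 1)).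
  by field; rewrite !gt_eqF.
apply: divr_ge0; last by rewrite !mulr_ge0 // ltW.
have : K <= 2 * y by lra.
nra.
Qed.


Lemma powR_ge1 (x t : R) : 1 <= x -> 1 <= t -> 1 <= x `^ t.
Proof. move=> x1 t1; exact: (le_trans x1 (le1r_powR x1 t1)). Qed.

Lemma core (s t K xa xb xc ya yb yc : R) :
  1 <= s -> 1 < t -> 0 < K ->
  1 <= xa -> 1 <= xb -> 1 <= xc -> 1 <= ya -> 1 <= yb -> 1 <= yc ->
  K <= 3 * xc -> K <= xa + ya -> K <= xb + yb ->
  K `^ (2 + s) * ((xa `^ s * xb `^ s * xc `^ s)^-1
                  * (ya `^ t * yb `^ t * yc `^ t)^-1)
  <= 8 * 3 `^ s * (((xa `^ t)^-1 + (ya `^ t)^-1) * (yc `^ t)^-1).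
Proof.
move=> s1 t1 K0 xa1 xb1 xc1 ya1 yb1 yc1 Kc Ka Kb.
have pos (z : R) : 1 <= z -> 0 < z by move=> ?; lra.
have ppos (z u : R) : 1 <= z -> 0 < z `^ u by move=> ?; apply: powR_gt0; lra.
have t1' : 1 <= t by lra.
have -> : K `^ (2 + s) = K ^+ 2 * K `^ s.
  rewrite powRD; last by apply/implyP => _; rewrite gt_eqF.
  by rewrite powR_mulrn // ltW.
have -> : K ^+ 2 * K `^ s * ((xa `^ s * xb `^ s * xc `^ s)^-1
                  * (ya `^ t * yb `^ t * yc `^ t)^-1)
   = (K `^ s / xc `^ s) * (K / (xa `^ s * ya `^ t)) * (K / (xb `^ s * yb `^ t))
     * (yc `^ t)^-1.
  by rewrite !invfM; ring.
have h1 : K `^ s / xc `^ s <= 3 `^ s.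
  rewrite ler_pdivrMr ?ppos // -powRM; last 2 first.
  - by [].
  - lra.
  apply: ge0_ler_powR; rewrite ?nnegrE; lra.
have h2 : K / (xa `^ s * ya `^ t) <= 2 * ((xa `^ t)^-1 + (ya `^ t)^-1).
  apply: le_trans _ (@L1 t K xa ya t1 xa1 ya1 Ka).
  rewrite ler_pM2l // lef_pV2 ?posrE ?mulr_gt0 ?ppos ?pos //.
  by rewrite ler_pM2r ?ppos // le1r_powR.
have h3 : K / (xb `^ s * yb `^ t) <= 4.
  apply: (@le_trans _ _ (2 * ((xb `^ t)^-1 + (yb `^ t)^-1))).
    apply: le_trans _ (@L1 t K xb yb t1 xb1 yb1 Kb).
    rewrite ler_pM2l // lef_pV2 ?posrE ?mulr_gt0 ?ppos ?pos //.
    by rewrite ler_pM2r ?ppos // le1r_powR.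
  have : (xb `^ t)^-1 <= 1 by rewrite invf_le1 ?ppos // powR_ge1.
  have : (yb `^ t)^-1 <= 1 by rewrite invf_le1 ?ppos // powR_ge1.
  lra.
have g0 (z u : R) : 1 <= z -> 0 <= (z `^ u)^-1 by move=> ?; rewrite invr_ge0 ltW // ppos.
have hc : 0 <= (yc `^ t)^-1 by apply: g0.
have e : 8 * 3 `^ s * (((xa `^ t)^-1 + (ya `^ t)^-1) * (yc `^ t)^-1)
  = 3 `^ s * (2 * ((xa `^ t)^-1 + (ya `^ t)^-1)) * 4 * (yc `^ t)^-1 by ring.
rewrite e; apply: ler_wpM2r => //.
apply: ler_pM => //.
- by do ![apply: mulr_ge0 | rewrite invr_ge0 | apply: powR_ge0 | apply: ltW].
- by do ![apply: mulr_ge0 | rewrite invr_ge0 | apply: powR_ge0 | apply: ltW].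
apply: ler_pM => //.
- by do ![apply: mulr_ge0 | rewrite invr_ge0 | apply: powR_ge0 | apply: ltW].
- by do ![apply: mulr_ge0 | rewrite invr_ge0 | apply: powR_ge0 | apply: ltW].
Qed.

End Pointwise.

Section Main.
Variable R : realType.

Lemma nz1 (z : int) : z != 0 -> 1 <= `|z%:~R : R|.
Proof. move=> z0; rewrite -intr_norm ler1z; lia. Qed.

Lemma norm_tri (k u : int) : `|k%:~R : R| <= `|u%:~R : R| + `|(k - u)%:~R : R|.
Proof.
have -> : (k%:~R : R) = u%:~R + (k - u)%:~R by rewrite -intrD addrC subrK.
exact: ler_normD.
Qed.

Definition Bfun (t : R) (k : int) (p : int * int * int) : R :=
  let '(k1, k2, k3) := p in
  (gpow t k1 + gpow t (k - k1)) * gpow t (k - k2)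
  + (gpow t k1 + gpow t (k - k1)) * gpow t (k - k3)
  + (gpow t k2 + gpow t (k - k2)) * gpow t (k - k1)
  + (gpow t k2 + gpow t (k - k2)) * gpow t (k - k3)
  + (gpow t k3 + gpow t (k - k3)) * gpow t (k - k1)
  + (gpow t k3 + gpow t (k - k3)) * gpow t (k - k2).

Lemma six_le (a1 a2 a3 a4 a5 a6 : R) :
  0 <= a1 -> 0 <= a2 -> 0 <= a3 -> 0 <= a4 -> 0 <= a5 -> 0 <= a6 ->
  (a1 <= a1 + a2 + a3 + a4 + a5 + a6) /\ (a2 <= a1 + a2 + a3 + a4 + a5 + a6) /\
      (a3 <= a1 + a2 + a3 + a4 + a5 + a6) /\ (a4 <= a1 + a2 + a3 + a4 + a5 + a6) /\
      (a5 <= a1 + a2 + a3 + a4 + a5 + a6) /\ (a6 <= a1 + a2 + a3 + a4 + a5 + a6).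
Proof. move=> *; do !split; lra. Qed.

Lemma Bfun_ge0 t k p : 0 <= Bfun t k p.
Proof.
case: p => [[k1 k2] k3] /=.
by rewrite !addr_ge0 // !mulr_ge0 // ?addr_ge0 // gpow_ge0.
Qed.

Lemma pointwise (a r : R) (k : int) p : 1 / 2 <= a -> 1 / 2 < r -> k != 0 ->
  starset k p ->
  `|k%:~R : R| `^ (2 + 2 * a) * summand a r k p
    <= 8 * 3 `^ (2 * a) * Bfun (2 * r) k p.
Proof.
move=> ha hr k0; case: p => [[k1 k2] k3] [hs hp h2 h3].
set s := 2 * a; set t := 2 * r.
have s1 : 1 <= s by rewrite /s; lra.
have t1 : 1 < t by rewrite /t; lra.
have [/andP[k10 k20] k30] : (k1 != 0) && (k2 != 0) /\ k3 != 0.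
  by move: hp; rewrite !mulf_eq0 !negb_or => /andP[].
rewrite /summand /Bfun.
rewrite intrM intrM !normrM !powRM ?normr_ge0 ?mulr_ge0 //.
rewrite !div1r.
set K : R := `|k%:~R : R|.
set x1 : R := `|k1%:~R : R|; set x2 : R := `|k2%:~R : R|; set x3 : R := `|k3%:~R : R|.
set y1 : R := `|(k - k1)%:~R : R|; set y2 : R := `|(k - k2)%:~R : R|.
set y3 : R := `|(k - k3)%:~R : R|.
have K0 : 0 < K by have := @nz1 k k0; rewrite -/K; lra.
have x11 : 1 <= x1 by apply: nz1.
have x21 : 1 <= x2 by apply: nz1.
have x31 : 1 <= x3 by apply: nz1.
have y21 : 1 <= y2 by apply: nz1; lia.
have y31 : 1 <= y3 by apply: nz1; lia.
have K1 : K <= x1 + y1 by apply: norm_tri.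
have K2 : K <= x2 + y2 by apply: norm_tri.
have K3 : K <= x3 + y3 by apply: norm_tri.
have Kx : K <= x1 + x2 + x3.
  rewrite /K -hs !intrD; apply: le_trans (ler_normD _ _) _.
  by rewrite lerD2r ler_normD.
have hB := @six_le _ _ _ _ _ _
  (mulr_ge0 (addr_ge0 (gpow_ge0 t k1) (gpow_ge0 t (k - k1))) (gpow_ge0 t (k - k2)))
  (mulr_ge0 (addr_ge0 (gpow_ge0 t k1) (gpow_ge0 t (k - k1))) (gpow_ge0 t (k - k3)))
  (mulr_ge0 (addr_ge0 (gpow_ge0 t k2) (gpow_ge0 t (k - k2))) (gpow_ge0 t (k - k1)))
  (mulr_ge0 (addr_ge0 (gpow_ge0 t k2) (gpow_ge0 t (k - k2))) (gpow_ge0 t (k - k3)))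
  (mulr_ge0 (addr_ge0 (gpow_ge0 t k3) (gpow_ge0 t (k - k3))) (gpow_ge0 t (k - k1)))
  (mulr_ge0 (addr_ge0 (gpow_ge0 t k3) (gpow_ge0 t (k - k3))) (gpow_ge0 t (k - k2))).
move: hB => [b1 [b2 [b3 [b4 [b5 b6]]]]].
have [y10|y1ne0] := eqVneq (k - k1) 0.
  have -> : y1 = 0 by rewrite /y1 y10 normr0.
  rewrite powR0; last by rewrite gt_eqF //; lra.
  rewrite !mul0r invr0 !mulr0.
  apply: mulr_ge0; first by rewrite mulr_ge0 // powR_ge0.
  apply: le_trans b1.
  by rewrite mulr_ge0 // ?addr_ge0 // gpow_ge0.
have y11 : 1 <= y1 by apply: nz1.
have c8 : 0 <= 8 * 3 `^ s by rewrite mulr_ge0 ?powR_ge0.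
rewrite -/s -/t.
case: (lerP K (3 * x1)) => [Kc|Kc1].
  have H := @core R s t K x2 x3 x1 y2 y3 y1 s1 t1 K0 x21 x31 x11 y21 y31 y11 Kc K2 K3.
  apply: (@le_trans _ _ (K `^ (2 + s) * ((x2 `^ s * x3 `^ s * x1 `^ s)^-1 * (y2 `^ t * y3 `^ t * y1 `^ t)^-1))).
    by rewrite le_eqVlt; apply/orP; left; apply/eqP; rewrite !invfM; ring.
  apply: (le_trans H).
  by rewrite ler_wpM2l //; exact: b3.
case: (lerP K (3 * x2)) => [Kc|Kc2].
  have H := @core R s t K x1 x3 x2 y1 y3 y2 s1 t1 K0 x11 x31 x21 y11 y31 y21 Kc K1 K3.
  apply: (@le_trans _ _ (K `^ (2 + s) * ((x1 `^ s * x3 `^ s * x2 `^ s)^-1 * (y1 `^ t * y3 `^ t * y2 `^ t)^-1))).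
    by rewrite le_eqVlt; apply/orP; left; apply/eqP; rewrite !invfM; ring.
  apply: (le_trans H).
  by rewrite ler_wpM2l //; exact: b1.
have Kc : K <= 3 * x3 by lra.
have H := @core R s t K x1 x2 x3 y1 y2 y3 s1 t1 K0 x11 x21 x31 y11 y21 y31 Kc K1 K2.
apply: (@le_trans _ _ (K `^ (2 + s) * ((x1 `^ s * x2 `^ s * x3 `^ s)^-1 * (y1 `^ t * y2 `^ t * y3 `^ t)^-1))).
  by rewrite le_eqVlt; apply/orP; left; apply/eqP; rewrite !invfM; ring.
apply: (le_trans H).
by rewrite ler_wpM2l //; exact: b2.
Qed.

Definition fpair (k : int) (j : nat) (p : int * int * int) : int * int :=
  let '(k1, k2, k3) := p in
  match j with
  | 0 => (k1, k - k2) | 1 => (k - k1, k - k2)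
  | 2 => (k1, k - k3) | 3 => (k - k1, k - k3)
  | 4 => (k2, k - k1) | 5 => (k - k2, k - k1)
  | 6 => (k2, k - k3) | 7 => (k - k2, k - k3)
  | 8 => (k3, k - k1) | 9 => (k - k3, k - k1)
  | 10 => (k3, k - k2) | _ => (k - k3, k - k2)
  end.

Lemma fpair_inj k j : set_inj (starset k) (fpair k j).
Proof.
move=> [[p1 p2] p3] [[q1 q2] q3] /set_mem [hp _ _ _] /set_mem [hq _ _ _].
case: j => [|[|[|[|[|[|[|[|[|[|[|j]]]]]]]]]]] /= [e1 e2];
  suff [-> [-> ->]] : p1 = q1 /\ p2 = q2 /\ p3 = q3 by [];
  (split; [lia | split; lia]).
Qed.

Lemma Bfun_sum t k p :
  Bfun t k p = \sum_(j < 12) gpow t (fpair k j p).1 * gpow t (fpair k j p).2.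
Proof.
case: p => [[k1 k2] k3].
rewrite !big_ord_recr big_ord0 /=.
ring.
Qed.

End Main.
Arguments Bfun {R}.
Arguments Bfun_ge0 {R}.
Arguments pointwise {R}.
Arguments Bfun_sum {R}.

Theorem mainTheorem11 (R : realType) (a r : R) :
  1 / 2 <= a -> 1 / 2 < r ->
  exists C : R, forall k : int, k != 0 ->
    ((`|k%:~R : R| `^ (2 + 2 * a))%:E
       * (\esum_(p in starset k) (summand a r k p)%:E) <= C%:E)%E.
Proof.
move=> ha hr.
set s := 2 * a; set t := 2 * r.
have t1 : 1 < t by rewrite /t; lra.
set M := 2 * (1 + (t - 1)^-1).
set c8 := 8 * 3 `^ s.
have c80 : 0 <= c8 by rewrite /c8 mulr_ge0 ?powR_ge0.
exists (c8 * (12%:R * (M * M))) => k k0.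
set Kp := `|k%:~R : R| `^ (2 + s).
have Kp0 : 0 < Kp.
  apply: powR_gt0; rewrite normr_gt0 intr_eq0 //.
have sum0 p : (0 <= summand a r k p)%R.
  case: p => [[k1 k2] k3]; rewrite /summand.
  by rewrite mulr_ge0 // divr_ge0 // ?mulr_ge0 // powR_ge0.
have step1 : (\esum_(p in starset k) (summand a r k p)%:E
   <= (Kp^-1)%:E * \esum_(p in starset k) (c8 * Bfun t k p)%:E)%E.
  have hZ := esumZ_le _ (starset k) (Kp^-1)%:E (fun p => (c8 * Bfun t k p)%:E).
  apply: le_trans _ (hZ _ _); last 2 first.
  - by rewrite lee_fin invr_ge0 ltW.
  - by move=> p; rewrite lee_fin mulr_ge0 // Bfun_ge0.
  apply: le_esum => p Sp; rewrite -EFinM lee_fin.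
  rewrite mulrC ler_pdivlMr //; rewrite mulrC.
  exact: pointwise.
have step2 : (\esum_(p in starset k) (c8 * Bfun t k p)%:E
   <= c8%:E * \esum_(p in starset k) (Bfun t k p)%:E)%E.
  under eq_esum do rewrite EFinM.
  by apply: esumZ_le => [|p]; rewrite lee_fin // Bfun_ge0.
have step3 : (\esum_(p in starset k) (Bfun t k p)%:E <= (12%:R * (M * M))%:E)%E.
  rewrite (eq_esum (fun p _ => congr1 EFin (Bfun_sum t k p))).
  under eq_esum do rewrite -sumEFin.
  rewrite esum_sum; last by move=> p j _ _; rewrite lee_fin mulr_ge0 // gpow_ge0.
  apply: le_trans (_ : (\sum_(j < 12) (M * M)%:E <= _)%E).
    apply: lee_sum => j _; rewrite EFinM.
    exact: esum_pair t1 (fpair_inj k j).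
  by rewrite sumEFin sumr_const card_ord mulr_natl.
have B0 : (0 <= 12%:R * (M * M))%R.
  by rewrite mulr_ge0 // mulr_ge0 // mulr_ge0 // addr_ge0 // invr_ge0 subr_ge0 ltW.
apply: (le_trans (lee_wpmul2l _ step1)); first by rewrite lee_fin ltW.
apply: (le_trans (lee_wpmul2l _ (lee_wpmul2l _ (le_trans step2 (lee_wpmul2l _ step3))))).
- by rewrite lee_fin ltW.
- by rewrite lee_fin invr_ge0 ltW.
- by rewrite lee_fin.
by rewrite -!EFinM lee_fin mulVKf // gt_eqF.
Qed.
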